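(* Let $G$ and $G'$ be graphs. If there exists a chordal graph $F$ of treewidth at most $2$ such that the number of homomorphisms from $F$ to $G$ differs from the number of homomorphisms from $F$ to $G'$, then $G$ and $G'$ are distinguishable by EB-1WL.
   Context: All graphs are finite, simple and undirected; the graphs $G,G'$ have no isolated vertices; $N(v)$ denotes the neighborhood of $v$. A homomorphism from $F=(V_F,E_F)$ to $G=(V,E)$ is a map $h:V_F\to V$ with $\{h(a),h(b)\}\in E$ for every $\{a,b\}\in E_F$. A graph is chordal if it has no induced cycle of length $\ge4$. An ordered edge of $G=(V,E)$ is a pair $(u,v)$ with $\{u,v\}\in E$. EB-1WL coloring: $\mathrm{eb}^{(0)}(G,(u,v))=1$ for every ordered edge, and $\mathrm{eb}^{(\ell+1)}(G,(u,v)) = \big(\mathrm{eb}^{(\ell)}(G,(u,v)),\ \{\!\{\mathrm{eb}^{(\ell)}(G,(u,x)) : x\in N(u)\}\!\},\ \{\!\{(\mathrm{eb}^{(\ell)}(G,(u,y)),\mathrm{eb}^{(\ell)}(G,(v,y))) : y\in N(u)\cap N(v)\}\!\},\ \{\!\{\mathrm{eb}^{(\ell)}(G,(v,z)) : z\in N(v)\}\!\}\big)$. $\mathrm{eb}^{(\ell)}(G)$ is the multiset of $\mathrm{eb}^{(\ell)}(G,(u,v))$ over all ordered edges. Graphs are distinguishable by EB-1WL if they have different numbers of vertices or there is $\ell$ with $\mathrm{eb}^{(\ell)}(G)\neq\mathrm{eb}^{(\ell)}(G')$. Colors are nested tuples/multisets, comparable across graphs. *)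

(* Defs.v *)
From HB Require Import structures.
From mathcomp Require Import all_boot.
From mathcomp Require Import finmap multiset.

Set Implicit Arguments.
Unset Strict Implicit.
Unset Printing Implicit Defensive.
Local Open Scope mset_scope.
Local Open Scope nat_scope.

Definition simple_graph (V : finType) (e : rel V) : Prop :=
  symmetric e /\ irreflexive e.

Definition no_isolated (V : finType) (e : rel V) : Prop :=
  forall v : V, exists u : V, e v u.

Definition hom_count (VF V : finType) (eF : rel VF) (e : rel V) : nat :=
  #|[set h : {ffun VF -> V} | [forall a, forall b, eF a b ==> e (h a) (h b)]]|.

(* Chordal: no induced cycle c_0 ... c_(k-1) (distinct vertices) of length k >= 4,
   i.e. no injective c : 'I_k -> V such that c i, c j are adjacent exactly when
   i, j are cyclically consecutive. *)
Definition chordal (V : finType) (e : rel V) : Prop :=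
  ~ exists (k : nat) (c : 'I_k -> V),
      [/\ 4 <= k, injective c &
        forall i j : 'I_k,
          e (c i) (c j) = (val j == (val i).+1 %% k) || (val i == (val j).+1 %% k)].

(* A (finite) tree: nonempty, simple, connected, with exactly |T| - 1 edges
   (counted as ordered pairs: 2 (|T| - 1)). *)
Definition is_tree (T : finType) (t : rel T) : Prop :=
  [/\ 0 < #|T|, simple_graph t, (forall x y : T, connect t x y) &
      #|[set p : T * T | t p.1 p.2]| = 2 * (#|T| - 1)].

Definition tree_decomposition (V : finType) (e : rel V)
    (T : finType) (t : rel T) (B : T -> {set V}) : Prop :=
  [/\ is_tree t,
      (forall v : V, exists i : T, v \in B i),
      (forall u v : V, e u v -> exists i : T, (u \in B i) && (v \in B i)) &
      (forall (v : V) (i j : T), v \in B i -> v \in B j ->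
         connect [rel a b | [&& t a b, v \in B a & v \in B b]] i j)].

Definition treewidth_le (V : finType) (e : rel V) (k : nat) : Prop :=
  exists (T : finType) (t : rel T) (B : T -> {set V}),
    tree_decomposition e t B /\ forall i : T, #|B i| <= k.+1.

(* Colours of EB-1WL at level l: a type common to all graphs.
   Level 0: unit (the constant colour 1); level l+1: the 4-tuple
   (old colour, multiset, multiset of pairs, multiset). *)
Fixpoint colorT (l : nat) : choiceType :=
  match l with
  | 0 => unit
  | l.+1 => (colorT l * {mset colorT l} * {mset (colorT l * colorT l)%type}
             * {mset colorT l})%type
  end.

(* eb^(l)(G,(u,v)); defined for all pairs, only used on ordered edges. *)
Fixpoint eb (V : finType) (e : rel V) (l : nat) : V -> V -> colorT l :=
  match l return V -> V -> colorT l with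
  | 0 => fun _ _ => tt
  | k.+1 => fun u v =>
      (eb e k u v,
       seq_mset [seq eb e k u x | x <- enum V & e u x],
       seq_mset [seq (eb e k u y, eb e k v y) | y <- enum V & e u y && e v y],
       seq_mset [seq eb e k v z | z <- enum V & e v z])
  end.

Definition eb_graph (V : finType) (e : rel V) (l : nat) : {mset colorT l} :=
  seq_mset [seq eb e l p.1 p.2 | p <- enum [set p : V * V | e p.1 p.2]].

Definition eb_distinguishable (V V' : finType) (e : rel V) (e' : rel V') : Prop :=
  #|V| <> #|V'| \/ exists l : nat, eb_graph e l <> eb_graph e' l.

(* Main.v *)
Require Import Defs.
From mathcomp Require Import all_boot.
From mathcomp Require Import finmap multiset.
From mathcomp Require Import ssralg ring zify.
From Stdlib Require Import Classical.
Set Implicit Arguments.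
Unset Strict Implicit.
Unset Printing Implicit Defensive.
Local Open Scope mset_scope.
Local Open Scope nat_scope.

Definition ctup l := (colorT l * {mset colorT l} * {mset (colorT l * colorT l)%type}
             * {mset colorT l})%type.

Fixpoint swapc (l : nat) : colorT l -> colorT l :=
  match l return colorT l -> colorT l with
  | 0 => fun c => c
  | k.+1 => fun (c : (colorT k * {mset colorT k} * {mset (colorT k * colorT k)%type}
             * {mset colorT k})%type) => (@swapc k c.1.1.1, c.2,
        seq_mset [seq (p.2, p.1) | p <- (c.1.2 : seq _)], c.1.1.2)
  end.

Lemma eb_swap (V : finType) (e : rel V) l u v : eb e l v u = @swapc l (eb e l u v).
Proof.
elim: l => [//|l IH] /=; rewrite IH; congr (_, _, _, _).
apply/eq_seq_msetP.
have H := perm_map (fun p : colorT l * colorT l => (p.2, p.1))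
  (perm_eq_seq_mset [seq (eb e l u y, eb e l v y) | y <- enum V & e u y && e v y]).
rewrite perm_sym in H. eapply perm_trans; last first. exact H. rewrite -map_comp /=.
by rewrite (@eq_filter _ _ (fun y => e v y && e u y)) // => y; rewrite andbC.
Qed.

Lemma sum_seq_mset (K : choiceType) (s : seq K) (g : K -> nat) :
  \sum_(c <- (seq_mset s : seq K)) g c = \sum_(c <- s) g c.
Proof. by apply: perm_big; apply: perm_eq_seq_mset. Qed.

Section Det.
Variables (V V' : finType) (e : rel V) (e' : rel V').

Definition Det l (f : V -> V -> nat) (f' : V' -> V' -> nat) :=
  exists g : colorT l -> nat,
    (forall u v, e u v -> f u v = g (eb e l u v)) /\
    (forall u v, e' u v -> f' u v = g (eb e' l u v)).
Definition VDet l (a : V -> nat) (a' : V' -> nat) :=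
  exists g : colorT l -> nat,
    (forall u v, e u v -> a u = g (eb e l u v)) /\
    (forall u v, e' u v -> a' u = g (eb e' l u v)).

Lemma Det_lift l f f' : Det l f f' -> Det l.+1 f f'.
Proof.
by case=> g [H1 H2]; exists (fun c => g c.1.1.1); split=> u v /= ?;
  [rewrite H1|rewrite H2].
Qed.

Lemma VDet_lift l f f' : VDet l f f' -> VDet l.+1 f f'.
Proof.
by case=> g [H1 H2]; exists (fun c => g c.1.1.1); split=> u v /= ?;
  [rewrite (H1 u v)|rewrite (H2 u v)].
Qed.

Lemma Det_swap l f f' : Det l f f' ->
  (forall u v, e u v -> e v u) -> (forall u v, e' u v -> e' v u) ->
  Det l (fun u v => f v u) (fun u v => f' v u).
Proof.
case=> g [H1 H2] s1 s2; exists (fun c => g (@swapc l c)); split=> u v /= huv.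
  by rewrite (H1 v u (s1 _ _ huv)) eb_swap.
by rewrite (H2 v u (s2 _ _ huv)) eb_swap.
Qed.

Lemma Det_mul l f1 f1' f2 f2' : Det l f1 f1' -> Det l f2 f2' ->
  Det l (fun u v => f1 u v * f2 u v) (fun u v => f1' u v * f2' u v).
Proof.
case=> g1 [H1 H2] [g2 [K1 K2]]; exists (fun c => g1 c * g2 c).
by split=> u v huv; [rewrite (H1 u v) // (K1 u v) | rewrite (H2 u v) // (K2 u v)].
Qed.

Lemma VDet_mul l f1 f1' f2 f2' : VDet l f1 f1' -> VDet l f2 f2' ->
  VDet l (fun u => f1 u * f2 u) (fun u => f1' u * f2' u).
Proof.
case=> g1 [H1 H2] [g2 [K1 K2]]; exists (fun c => g1 c * g2 c).
by split=> u v huv; [rewrite (H1 u v) // (K1 u v) | rewrite (H2 u v) // (K2 u v)].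
Qed.

Lemma VDet_Det l a a' : VDet l a a' -> Det l (fun u v => a u) (fun u v => a' u).
Proof. by case=> g [H1 H2]; exists g; split=> u v huv; [rewrite (H1 u v)|rewrite (H2 u v)]. Qed.

Lemma VDet_const l c : VDet l (fun _ => c) (fun _ => c).
Proof. by exists (fun _ => c). Qed.

Lemma Det_const l c : Det l (fun _ _ => c) (fun _ _ => c).
Proof. by exists (fun _ => c). Qed.

Lemma Det_tri l f1 f1' f2 f2' : Det l f1 f1' -> Det l f2 f2' ->
  Det l.+1 (fun y z => \sum_(x | e y x && e z x) f1 y x * f2 z x)
           (fun y z => \sum_(x | e' y x && e' z x) f1' y x * f2' z x).
Proof.
case=> g1 [H1 H2] [g2 [K1 K2]].
exists (fun c : ctup l => \sum_(p <- (c.1.2 : seq _)) g1 p.1 * g2 p.2).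
split=> y z _ /=; rewrite sum_seq_mset big_map big_filter;
  rewrite [in RHS](big_enum_cond _ _ _ (fun x => _ && _)) /=;
  apply: eq_bigr => x /andP[h1 h2]; [rewrite (H1 y x) // (K1 z x) // | rewrite (H2 y x) // (K2 z x) //].
Qed.

Lemma VDet_nb l f f' : Det l f f' ->
  VDet l.+1 (fun y => \sum_(x | e y x) f y x) (fun y => \sum_(x | e' y x) f' y x).
Proof.
case=> g [H1 H2].
exists (fun c : ctup l => \sum_(c' <- (c.1.1.2 : seq _)) g c').
split=> y z _ /=; rewrite sum_seq_mset big_map big_filter;
  rewrite [in RHS](big_enum_cond _ _ _ (fun x => _)) /=;
  apply: eq_bigr => x h1; [rewrite (H1 y x) // | rewrite (H2 y x) //].
Qed.


Lemma eb_graph_sum (W : finType) (r : rel W) l (g : colorT l -> nat) :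
  \sum_(p : W * W | r p.1 p.2) g (eb r l p.1 p.2) = \sum_(c <- (eb_graph r l : seq _)) g c.
Proof.
rewrite /eb_graph sum_seq_mset big_map big_enum /=.
by apply: eq_bigl => p; rewrite inE.
Qed.

Lemma edge_sum l (g : colorT l -> nat) : eb_graph e l = eb_graph e' l ->
  \sum_(p : V * V | e p.1 p.2) g (eb e l p.1 p.2) =
  \sum_(p : V' * V' | e' p.1 p.2) g (eb e' l p.1 p.2).
Proof. by move=> H; rewrite !eb_graph_sum H. Qed.

Lemma sum_ind_eq (N k x : nat) : \sum_(d < N) ((k == d) * x) = (k < N) * x.
Proof.
elim: N => [|N IH]; first by rewrite big_ord0.
rewrite big_ord_recr /= IH -mulnDl ltnS; congr (_ * _).
by case: (ltngtP k N).
Qed.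

Lemma deg_size (W : finType) (r : rel W) l u v :
  \sum_(x | r u x) 1 = size (((eb r l.+1 u v : ctup l).1.1.2) : seq _).
Proof.
rewrite -sum1_size sum_seq_mset big_map big_filter big_enum_cond /=.
by apply: eq_bigl => x.
Qed.

Lemma vertex_sum l a a' : VDet l a a' ->
  (forall l, eb_graph e l = eb_graph e' l) -> #|V| = #|V'| ->
  no_isolated e -> no_isolated e' -> \sum_u a u = \sum_u a' u.
Proof.
case=> g [H1 H2] Heb HV n1 n2.
pose deg (W : finType) (r : rel W) (u : W) := \sum_(x | r u x) 1.
pose T (W : finType) (r : rel W) (b : W -> nat) d := \sum_u ((deg W r u == d) * b u).
have key (W : finType) (r : rel W) (b : W -> nat) d :
   (forall u v, r u v -> b u = g (eb r l u v)) ->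
   \sum_(p : W * W | r p.1 p.2)
      (fun c : ctup l => (size (c.1.1.2 : seq _) == d) * g c.1.1.1) (eb r l.+1 p.1 p.2)
   = d * T W r b d.
  move=> Hb.
  rewrite (eq_bigr (fun p : W * W => (deg W r p.1 == d) * b p.1)); last first.
    by move=> [u v] /= huv; rewrite (Hb u v huv) /deg (deg_size r l u v).
  rewrite (eq_bigl (fun p : W * W => xpredT p.1 && r p.1 p.2)) //.
  rewrite -(pair_big_dep xpredT (fun u v => r u v) (fun u v => (deg W r u == d) * b u)) /=.
  rewrite /T big_distrr /=; apply: eq_bigr => u _.
  set c := (_ * b u).
  rewrite (eq_bigr (fun _ => c * 1) (fun i _ => esym (muln1 c))) -big_distrr /=.
  rewrite -/(deg W r u) /c.
  by case: (eqVneq (deg W r u) d) => [->|ne]; rewrite /= ?mul0n ?muln0 // mul1n mulnC.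
have hT d : 0 < d -> T V e a d = T V' e' a' d.
  move=> d0; apply/eqP; rewrite -(eqn_pmul2l d0) -(key V e a d H1) -(key V' e' a' d H2).
  by apply/eqP; apply: (@edge_sum l.+1 (fun c : ctup l => (size (c.1.1.2 : seq _) == d) * g c.1.1.1) (Heb l.+1)).
have degpos (W : finType) (r : rel W) u : no_isolated r -> 0 < deg W r u.
  by move=> nr; case: (nr u) => v huv; rewrite /deg (bigD1 v) //= addnC addn1.
have degle (W : finType) (r : rel W) u : deg W r u < #|W|.+1.
  by rewrite ltnS /deg sum1dep_card max_card.
have split (W : finType) (r : rel W) (b : W -> nat) :
    \sum_u b u = \sum_(d < #|W|.+1) T W r b d.
  rewrite /T exchange_big /=; apply: eq_bigr => u _.
  by rewrite sum_ind_eq degle mul1n.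
rewrite (split V e) (split V' e') HV; apply: eq_bigr => [[d Hd]] _ /=.
case: d Hd => [|d] Hd; last exact: hT.
rewrite /T !big1 // => u _.
  by rewrite eqn0Ngt degpos.
by rewrite eqn0Ngt degpos.
Qed.

End Det.

Section Hom.
Variables (VF V : finType) (eF : rel VF).

Definition upd (h : {ffun VF -> V}) w y : {ffun VF -> V} :=
  [ffun x => if x == w then y else h x].

Lemma upd_eq h w y : (upd h w y == h) = (h w == y).
Proof.
apply/eqP/eqP => [<-|H]; first by rewrite ffunE eqxx.
by apply/ffunP => x; rewrite ffunE; case: eqP => // ->.
Qed.

Lemma upd_upd h w y z : upd (upd h w z) w y = upd h w y.
Proof. by apply/ffunP => x; rewrite !ffunE; case: eqP. Qed.

Lemma upd_w h w y : (upd h w y) w = y.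
Proof. by rewrite ffunE eqxx. Qed.

Lemma partition_w (w : VF) (F : {ffun VF -> V} -> nat) :
  \sum_(h : {ffun VF -> V}) F h = \sum_y \sum_(h : {ffun VF -> V} | h w == y) F h.
Proof. by rewrite (partition_big (fun h : {ffun VF -> V} => h w) xpredT). Qed.

Lemma fiber (w : VF) (Psi : {ffun VF -> V} -> nat) :
  (forall h y, Psi (upd h w y) = Psi h) ->
  forall y, \sum_(h : {ffun VF -> V}) Psi h = #|V| * \sum_(h : {ffun VF -> V} | h w == y) Psi h.
Proof.
move=> HP y.
have E z : \sum_(h : {ffun VF -> V} | h w == z) Psi h = \sum_(h : {ffun VF -> V} | h w == y) Psi h.
  rewrite (reindex_onto (fun h : {ffun VF -> V} => upd h w z) (fun h => upd h w y)) /=; last first.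
    by move=> h /eqP hz; rewrite upd_upd; apply/eqP; rewrite upd_eq hz.
  apply: eq_big => h; last by move=> _; rewrite HP.
  by rewrite upd_w eqxx upd_upd upd_eq.
rewrite (partition_w w) (eq_bigr (fun _ => \sum_(h : {ffun VF -> V} | h w == y) Psi h)) => [|z _]; last exact: E.
by rewrite sum_nat_const.
Qed.

Lemma elim_w (w : VF) (R : {ffun VF -> V} -> nat) (phi : {ffun VF -> V} -> V -> nat) :
  (forall h y, R (upd h w y) = R h) -> (forall h y x, phi (upd h w y) x = phi h x) ->
  #|V| * \sum_(h : {ffun VF -> V}) R h * phi h (h w) = \sum_(h : {ffun VF -> V}) R h * \sum_x phi h x.
Proof.
move=> HR Hphi.
rewrite [in RHS](eq_bigr (fun h : {ffun VF -> V} => \sum_x R h * phi h x)) => [|h _]; last by rewrite big_distrr.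
rewrite exchange_big /=.
rewrite (eq_bigr (fun x => #|V| * \sum_(h : {ffun VF -> V} | h w == x) R h * phi h x)) => [|x _]; last first.
  by apply: fiber => h y; rewrite HR Hphi.
rewrite -big_distrr /= (partition_w w); congr (_ * _); apply: eq_bigr => x _.
by apply: eq_bigr => h /eqP ->.
Qed.


Implicit Types (S X : {set VF}) (al : VF -> V -> nat) (be : VF -> VF -> V -> V -> nat) (h : {ffun VF -> V}) (w a b : VF) (y z : V).

Definition Pw (S : {set VF}) (al : VF -> V -> nat) (be : VF -> VF -> V -> V -> nat)
  (h : {ffun VF -> V}) : nat :=
  (\prod_(a in S) al a (h a)) * \prod_(a in S) \prod_(b in S | eF a b) be a b (h a) (h b).

Definition W S al be := \sum_(h : {ffun VF -> V}) Pw S al be h.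

Definition Nb (S : {set VF}) w := [set b in S | eF w b].

Lemma Pw_indep S al be w h y : w \notin S -> Pw S al be (upd h w y) = Pw S al be h.
Proof.
move=> wS; rewrite /Pw; congr (_ * _).
  by apply: eq_bigr => a aS; rewrite ffunE; case: eqP => // E; rewrite -E aS in wS.
apply: eq_bigr => a aS; apply: eq_bigr => b /andP[bS _]; rewrite !ffunE.
by case: eqP => [E|_]; [rewrite -E aS in wS|case: eqP => // E; rewrite -E bS in wS].
Qed.

Lemma Pw_split S al be w h : symmetric eF -> irreflexive eF -> w \in S ->
  Pw S al be h = Pw (S :\ w) al be h *
    (al w (h w) * \prod_(b in Nb S w) (be w b (h w) (h b) * be b w (h b) (h w))).
Proof.
move=> sym irr wS; rewrite /Pw (bigD1 w) //= (bigD1 w wS) /=.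
have E1 : forall F : VF -> nat, \prod_(a in S | a != w) F a = \prod_(a in S :\ w) F a.
  by move=> F; apply: eq_bigl => a; rewrite in_setD1 andbC.
rewrite !E1.
have E2 : \prod_(b in S | eF w b) be w b (h w) (h b) = \prod_(b in Nb S w) be w b (h w) (h b).
  by apply: eq_bigl => b; rewrite inE.
rewrite E2.
have EQ : \prod_(a in S :\ w) \prod_(b in S | eF a b) be a b (h a) (h b) =
  \prod_(a in S :\ w) ((if eF a w then be a w (h a) (h w) else 1) *
           \prod_(b in S :\ w | eF a b) be a b (h a) (h b)).
  apply: eq_bigr => a /setD1P[aw aS].
  case: ifP => aw'.
    rewrite (bigD1 w) ?wS ?aw' //=; congr (_ * _).
    by apply: eq_bigl => b; rewrite in_setD1 andbC andbA.
  rewrite mul1n; apply: eq_bigl => b; rewrite in_setD1.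
  by case: eqP => // ->; rewrite aw' andbF.
rewrite EQ.
rewrite big_split /=.
have E3 : \prod_(a in S :\ w) (if eF a w then be a w (h a) (h w) else 1) =
          \prod_(b in Nb S w) be b w (h b) (h w).
  rewrite big_mkcond [RHS]big_mkcond; apply: eq_bigr => a _.
  rewrite !inE (sym w a); case: eqP => [->|_] /=; last by case: (a \in S); case: (eF a w).
  by rewrite irr andbF; case: (w \in S).
rewrite E3 big_split /=.
move: (al w (h w)) (\prod_(a in S :\ w) al a (h a)) (\prod_(b in Nb S w) be w b (h w) (h b))
  (\prod_(b in Nb S w) be b w (h b) (h w)) (\prod_(i in S :\ w) \prod_(b in S :\ w | eF i b) be i b (h i) (h b)) => A B C D E.
ring.
Qed.



Definition updA al a (D : V -> nat) : VF -> V -> nat :=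
  fun c => if c == a then (fun y => al c y * D y) else al c.
Definition updB be a b (D : V -> V -> nat) : VF -> VF -> V -> V -> nat :=
  fun c d => if (c == a) && (d == b) then (fun y z => be c d y z * D y z) else be c d.

Lemma Pw_updA X al be a D h : a \in X -> Pw X (updA al a D) be h = Pw X al be h * D (h a).
Proof.
move=> aX; rewrite /Pw (bigD1 a) //= [in RHS](bigD1 a) //= {1}/updA eqxx.
rewrite (eq_bigr (fun c => al c (h c))); last by move=> c /andP[_ /negbTE]; rewrite /updA => ->.
ring.
Qed.

Lemma Pw_updB X al be a b D h : a \in X -> b \in X -> eF a b ->
  Pw X al (updB be a b D) h = Pw X al be h * D (h a) (h b).
Proof.
move=> aX bX ab; rewrite /Pw -mulnA; congr (_ * _).
rewrite (bigD1 a) //= [in RHS](bigD1 a) //=.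
rewrite (bigD1 b) ?bX ?ab //= [in RHS](bigD1 b) ?bX ?ab //= {1}/updB !eqxx /=.
rewrite (eq_bigr (fun d => be a d (h a) (h d))); last first.
  by move=> d /andP[_ /negbTE]; rewrite /updB eqxx => ->.
rewrite [Y in _ * Y = _](eq_bigr (fun c => \prod_(d in X | eF c d) be c d (h c) (h d))); last first.
  move=> c /andP[_ /negbTE ca]; apply: eq_bigr => d _; by rewrite /updB ca.
ring.
Qed.

Lemma W_elim S al be w : symmetric eF -> irreflexive eF -> w \in S ->
  #|V| * W S al be = \sum_h Pw (S :\ w) al be h *
     \sum_x (al w x * \prod_(b in Nb S w) (be w b x (h b) * be b w (h b) x)).
Proof.
move=> sym irr wS; rewrite /W.
rewrite (eq_bigr (fun h => Pw (S :\ w) al be h *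
   (fun h x => al w x * \prod_(b in Nb S w) (be w b x (h b) * be b w (h b) x)) h (h w))).
  apply: elim_w => h y; first by rewrite Pw_indep // setD11.
  move=> x; congr (_ * _); apply: eq_bigr => b; rewrite inE => /andP[_ wb].
  have bw : b != w by apply/eqP => E; rewrite E irr in wb.
  by rewrite !ffunE (negbTE bw).
by move=> h _; rewrite (Pw_split _ _ _ sym irr wS).
Qed.

Lemma W_case0 S al be w : symmetric eF -> irreflexive eF -> w \in S -> Nb S w = set0 ->
  #|V| * W S al be = W (S :\ w) al be * \sum_x al w x.
Proof.
move=> sym irr wS N0; rewrite (W_elim al be sym irr wS) N0 /W big_distrl /=.
by apply: eq_bigr => h _; congr (_ * _); apply: eq_bigr => x _; rewrite big_set0 muln1.
Qed.

Lemma W_case1 S al be w a : symmetric eF -> irreflexive eF -> w \in S -> Nb S w = [set a] ->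
  #|V| * W S al be = W (S :\ w) (updA al a (fun y => \sum_x al w x * (be w a x y * be a w y x))) be.
Proof.
move=> sym irr wS N1; rewrite (W_elim al be sym irr wS) N1 /W.
have aS : a \in S :\ w.
  have : a \in Nb S w by rewrite N1 set11.
  rewrite inE => /andP[aS wa]; rewrite in_setD1 aS andbT.
  by apply/eqP => E; rewrite E irr in wa.
apply: eq_bigr => h _; rewrite Pw_updA //; congr (_ * _).
by apply: eq_bigr => x _; rewrite big_set1.
Qed.

Lemma W_case2 S al be w a b : symmetric eF -> irreflexive eF -> w \in S ->
  a != b -> eF a b -> Nb S w = [set a; b] ->
  #|V| * W S al be = W (S :\ w) al (updB be a b (fun y z => \sum_x al w x *
       ((be w a x y * be a w y x) * (be w b x z * be b w z x)))).
Proof.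
move=> sym irr wS ab eab N2; rewrite (W_elim al be sym irr wS) N2 /W.
have inS c : c \in [set a; b] -> c \in S :\ w.
  rewrite -N2 inE => /andP[cS wc]; rewrite in_setD1 cS andbT.
  by apply/eqP => E; rewrite E irr in wc.
apply: eq_bigr => h _; rewrite Pw_updB ?inS ?set21 ?set22 //; congr (_ * _).
apply: eq_bigr => x _; rewrite big_setU1 ?big_set1 //=.
by rewrite inE.
Qed.

End Hom.

Section Main.
Variables (V V' : finType) (e : rel V) (e' : rel V') (VF : finType) (eF : rel VF).

Lemma VDet_eq l (a1 a2 : V -> nat) (a1' a2' : V' -> nat) :
  (forall u, a1 u = a2 u) -> (forall u, a1' u = a2' u) ->
  VDet e e' l a1 a1' -> VDet e e' l a2 a2'.
Proof.
move=> E E' [g [H1 H2]]; exists g; split=> u v huv.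
  by rewrite -E (H1 u v).
by rewrite -E' (H2 u v).
Qed.

Lemma Det_eq l (a1 a2 : V -> V -> nat) (a1' a2' : V' -> V' -> nat) :
  (forall u v, e u v -> a1 u v = a2 u v) -> (forall u v, e' u v -> a1' u v = a2' u v) ->
  Det e e' l a1 a1' -> Det e e' l a2 a2'.
Proof.
move=> E E' [g [H1 H2]]; exists g; split=> u v huv.
  by rewrite -E // (H1 u v).
by rewrite -E' // (H2 u v).
Qed.

Lemma W_empty (W0 : finType) (al : VF -> W0 -> nat) (be : VF -> VF -> W0 -> W0 -> nat) :
  W eF set0 al be = #|W0| ^ #|VF|.
Proof.
rewrite /W /Pw (eq_bigr (fun _ => 1)) => [|h _]; last by rewrite !big_set0.
by rewrite sum1_card card_ffun.
Qed.

Lemma W_V0 (W0 : finType) (S : {set VF}) (al : VF -> W0 -> nat) (be : VF -> VF -> W0 -> W0 -> nat) (w : VF) :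
  #|W0| = 0 -> w \in S -> W eF S al be = 0.
Proof.
move=> H0 wS; rewrite /W big1 // => h _.
by have := card0_eq H0 (h w); rewrite !inE.
Qed.


Definition Hyp (S : {set VF}) l (al : VF -> V -> nat) (al' : VF -> V' -> nat)
  (be : VF -> VF -> V -> V -> nat) (be' : VF -> VF -> V' -> V' -> nat) :=
  [/\ (forall a, a \in S -> VDet e e' l (al a) (al' a)),
      (forall a b, a \in S -> b \in S -> eF a b -> Det e e' l (be a b) (be' a b)),
      (forall a b x y, ~~ e x y -> be a b x y = 0) &
      (forall a b x y, ~~ e' x y -> be' a b x y = 0)].

Hypothesis symE : symmetric eF.
Hypothesis irrE : irreflexive eF.
Hypothesis simp : forall S : {set VF}, S != set0 -> exists w,
  [/\ w \in S, #|Nb eF S w| <= 2 &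
      forall a b, a \in Nb eF S w -> b \in Nb eF S w -> a != b -> eF a b].
Hypothesis HV : #|V| = #|V'|.
Hypothesis Heb : forall l, eb_graph e l = eb_graph e' l.
Hypothesis hG : simple_graph e.
Hypothesis hG' : simple_graph e'.
Hypothesis nG : no_isolated e.
Hypothesis nG' : no_isolated e'.

Lemma main_ind n (S : {set VF}) : #|S| <= n -> forall l al al' be be',
  Hyp S l al al' be be' -> W eF S al be = W eF S al' be'.
Proof.
have s1 : forall u v, e u v -> e v u by move=> u v; rewrite (proj1 hG).
have s2 : forall u v, e' u v -> e' v u by move=> u v; rewrite (proj1 hG').
elim: n S => [|n IH] S Sn l al al' be be' [Hal Hbe Hs Hs'].
  have -> : S = set0 by apply/eqP; rewrite -cards_eq0; lia.
  by rewrite !W_empty HV.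
case: (eqVneq S set0) => [->|Sne]; first by rewrite !W_empty HV.
case: (simp Sne) => w [wS Nw Ncl].
have Sw : #|S :\ w| <= n by move: Sn; rewrite (cardsD1 w S) wS; lia.
case: (posnP #|V|) => [V0|Vpos].
  by rewrite (W_V0 _ _ V0 wS) (W_V0 _ _ (etrans (esym HV) V0) wS).
have Vpos' : 0 < #|V'| by rewrite -HV.
apply/eqP; rewrite -(eqn_pmul2l Vpos) {2}HV; apply/eqP.
have inNb c : c \in Nb eF S w -> [/\ c \in S, eF w c & c \in S :\ w].
  rewrite inE => /andP[cS wc]; split=> //; rewrite in_setD1 cS andbT.
  by apply/eqP => E; rewrite E irrE in wc.
have Halw : forall c, c \in S :\ w -> VDet e e' l (al c) (al' c).
  by move=> c /setD1P[_ cS]; apply: Hal.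
have Hbew : forall c d, c \in S :\ w -> d \in S :\ w -> eF c d -> Det e e' l (be c d) (be' c d).
  by move=> c d /setD1P[_ cS] /setD1P[_ dS]; apply: Hbe.
have [N0|[N1|N2]] : #|Nb eF S w| = 0 \/ #|Nb eF S w| = 1 \/ #|Nb eF S w| = 2 by lia.
- have Nb0 : Nb eF S w = set0 by apply/eqP; rewrite -cards_eq0 N0.
  rewrite (W_case0 al be symE irrE wS Nb0) (W_case0 al' be' symE irrE wS Nb0).
  congr (_ * _); first by apply: (IH _ Sw l); split.
  by apply: (vertex_sum (Hal w wS)).
- move/eqP/cards1P: N1 => [a Na].
  have [aS wa aSw] : [/\ a \in S, eF w a & a \in S :\ w] by apply: inNb; rewrite Na set11.
  have aw : eF a w by rewrite symE.
  rewrite (W_case1 al be symE irrE wS Na) (W_case1 al' be' symE irrE wS Na).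
  apply: (IH _ Sw l.+1); split => //; last first.
    by move=> c d cS dS cd; apply: Det_lift; apply: Hbew.
  move=> c cS; rewrite /updA; case: eqP => [->|_]; last by apply: VDet_lift; apply: Halw.
  apply: VDet_mul; first by apply: VDet_lift; apply: Hal.
  apply: VDet_eq (VDet_nb (f := fun y x => al w x * (be w a x y * be a w y x))
                         (f' := fun y x => al' w x * (be' w a x y * be' a w y x)) _).
  + move=> y; rewrite [RHS](bigID (fun x => e y x)) /= [X in _ = _ + X]big1 ?addn0 //.
    by move=> x /negbTE nx; rewrite (Hs a w y x) ?nx // !muln0.
  + move=> y; rewrite [RHS](bigID (fun x => e' y x)) /= [X in _ = _ + X]big1 ?addn0 //.
    by move=> x /negbTE nx; rewrite (Hs' a w y x) ?nx // !muln0.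
  apply: Det_mul; first exact: (Det_swap (VDet_Det (Hal w wS)) s1 s2).
  apply: Det_mul; first exact: (Det_swap (Hbe w a wS aS wa) s1 s2).
  exact: Hbe.
- move/eqP/cards2P: N2 => [a [b [ab Nab]]].
  have [aS wa aSw] : [/\ a \in S, eF w a & a \in S :\ w] by apply: inNb; rewrite Nab set21.
  have [bS wb bSw] : [/\ b \in S, eF w b & b \in S :\ w] by apply: inNb; rewrite Nab set22.
  have aw : eF a w by rewrite symE.
  have bw : eF b w by rewrite symE.
  have eab : eF a b by apply: Ncl; rewrite // Nab ?set21 ?set22.
  rewrite (W_case2 al be symE irrE wS ab eab Nab) (W_case2 al' be' symE irrE wS ab eab Nab).
  apply: (IH _ Sw l.+1); split => //.
  + by move=> c cS; apply: VDet_lift; apply: Halw.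
  + move=> c d cS dS cd; rewrite /updB; case: ifP => [/andP[/eqP-> /eqP->]|_]; last first.
      by apply: Det_lift; apply: Hbew.
    apply: Det_mul; first by apply: Det_lift; apply: Hbe.
    apply: Det_eq (Det_tri (f1 := fun y x => al w x * (be w a x y * be a w y x))
                          (f1' := fun y x => al' w x * (be' w a x y * be' a w y x))
                          (f2 := fun z x => be w b x z * be b w z x)
                          (f2' := fun z x => be' w b x z * be' b w z x) _ _).
    * move=> y z _; rewrite [RHS](bigID (fun x => e y x && e z x)) /= [X in _ = _ + X]big1 ?addn0.
        by apply: eq_bigr => x _; rewrite !mulnA.
      move=> x; case/nandP => /negbTE nx.
        by rewrite (Hs a w y x) ?nx // !(muln0, mul0n).
      by rewrite (Hs b w z x) ?nx // !(muln0, mul0n).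
    * move=> y z _; rewrite [RHS](bigID (fun x => e' y x && e' z x)) /= [X in _ = _ + X]big1 ?addn0.
        by apply: eq_bigr => x _; rewrite !mulnA.
      move=> x; case/nandP => /negbTE nx.
        by rewrite (Hs' a w y x) ?nx // !(muln0, mul0n).
      by rewrite (Hs' b w z x) ?nx // !(muln0, mul0n).
    * apply: Det_mul; first exact: (Det_swap (VDet_Det (Hal w wS)) s1 s2).
      apply: Det_mul; first exact: (Det_swap (Hbe w a wS aS wa) s1 s2).
      exact: Hbe.
    * apply: Det_mul; first exact: (Det_swap (Hbe w b wS bS wb) s1 s2).
      exact: Hbe.
  + move=> c d x y nxy; rewrite /updB; case: ifP => _; last exact: Hs.
    by rewrite (Hs _ _ _ _ nxy).
  + move=> c d x y nxy; rewrite /updB; case: ifP => _; last exact: Hs'.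
    by rewrite (Hs' _ _ _ _ nxy).
Qed.

End Main.

Lemma prod_bool (I : finType) (Q B : pred I) :
  \prod_(i | Q i) (B i : nat) = [forall i, Q i ==> B i].
Proof.
case: (boolP [forall i, Q i ==> B i]) => H.
  by apply: big1 => i Qi; move/forallP/(_ i): H; rewrite Qi /= => ->.
move: H; rewrite negb_forall => /existsP[i]; rewrite negb_imply => /andP[Qi nB].
by rewrite (bigD1 i) //= (negbTE nB).
Qed.

Lemma hom_W (VF V : finType) (eF : rel VF) (e : rel V) :
  hom_count eF e = W eF setT (fun _ _ => 1) (fun _ _ x y => (e x y : nat)).
Proof.
rewrite /hom_count /W -sum1dep_card big_mkcond /=; apply: eq_bigr => h _.
rewrite /Pw big1 // mul1n.
rewrite (eq_bigr (fun a => ([forall b, eF a b ==> e (h a) (h b)] : nat))); last first.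
  move=> a _; rewrite (eq_bigl (fun b => eF a b)) ?prod_bool // => b.
  by rewrite inE.
rewrite (eq_bigl xpredT); last by move=> a; rewrite inE.
by rewrite prod_bool.
Qed.

Lemma hom_eq (V V' : finType) (e : rel V) (e' : rel V') (VF : finType) (eF : rel VF) :
  simple_graph eF ->
  (forall S : {set VF}, S != set0 -> exists w,
    [/\ w \in S, #|Nb eF S w| <= 2 &
      forall a b, a \in Nb eF S w -> b \in Nb eF S w -> a != b -> eF a b]) ->
  #|V| = #|V'| -> (forall l, eb_graph e l = eb_graph e' l) ->
  simple_graph e -> simple_graph e' -> no_isolated e -> no_isolated e' ->
  hom_count eF e = hom_count eF e'.
Proof.
move=> [symE irrE] simp HV Heb hG hG' nG nG'.
rewrite !hom_W; apply: (main_ind symE irrE simp HV Heb hG hG' nG nG' (leqnn _) (l := 0)).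
split.
- by move=> a _; apply: VDet_const.
- by move=> a b _ _ _; exists (fun _ => 1); split=> u v ->.
- by move=> a b x y /negbTE ->.
- by move=> a b x y /negbTE ->.
Qed.

Lemma conn_step (T : finType) (r : rel T) x y : x != y -> connect r x y -> exists z, r x z.
Proof.
move=> xy /connectP[[|z p] /= pth E]; first by rewrite E eqxx in xy.
by exists z; case/andP: pth.
Qed.

Lemma path_avoid (T : finType) (r : rel T) l x p :
  path r x p -> x != l -> l \notin p ->
  path [rel a b | [&& r a b, a != l & b != l]] x p.
Proof.
elim: p x => [//|z p IH] x /= /andP[rxz pth] xl.
rewrite inE negb_or => /andP[zl lp].
by rewrite rxz xl eq_sym zl /= IH // eq_sym.
Qed.

Lemma avoid (T : finType) (r : rel T) l j x y :
  (forall z, r l z -> z = j) -> (forall z, r z l -> z = j) ->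
  x != l -> y != l -> connect r x y ->
  connect [rel a b | [&& r a b, a != l & b != l]] x y.
Proof.
move=> H1 H2 xl yl /connectP[p pth E]; subst y.
move: yl; case/shortenP: pth => p' pth' uq _ yl.
apply/connectP; exists p' => //; apply: path_avoid => //.
apply/negP => lp; move: pth' uq yl; case/splitPr: lp => p1 p2.
rewrite cat_path last_cat /= => /and3P[_ rl pth2].
case: p2 pth2 => [|z p2] /=; first by rewrite eqxx.
case/andP=> rz _ uq _.
have zj := H1 z rz; have lj := H2 _ rl; subst z.
have U : uniq ((x :: p1) ++ (l :: j :: p2)) by exact: uq.
move: U; rewrite cat_uniq => /and3P[_ /hasPn H _].
have Hj : j \notin x :: p1 by apply: H; rewrite !inE eqxx orbT.
by move: Hj; rewrite -{1}lj mem_last.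
Qed.

Section Tree.
Variables (VF : finType) (eF : rel VF) (T : finType) (t : rel T) (B : T -> {set VF}).
Hypothesis symt : symmetric t.
Hypothesis irrt : irreflexive t.
Hypothesis irrF : irreflexive eF.
Hypothesis Bsz : forall i, #|B i| <= 3.

Implicit Types (U : {set T}) (S : {set VF}).

Definition rU (U : {set T}) := [rel x y | [&& x \in U, y \in U & t x y]].
Definition degU (U : {set T}) i := #|[set j in U | t i j]|.
Definition tree_on U := (forall x y, x \in U -> y \in U -> connect (rU U) x y) /\
   \sum_(i in U) degU U i = 2 * (#|U| - 1).
Definition rUv (U : {set T}) v := [rel x y | [&& x \in U, y \in U, t x y, v \in B x & v \in B y]].
Definition dec_on (U : {set T}) (S : {set VF}) :=
  [/\ (forall v, v \in S -> exists2 i, i \in U & v \in B i),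
      (forall u v, u \in S -> v \in S -> eF u v -> exists2 i, i \in U & (u \in B i) && (v \in B i)) &
      (forall v i j, v \in S -> i \in U -> j \in U -> v \in B i -> v \in B j -> connect (rUv U v) i j)].

Lemma leaf U : tree_on U -> 1 < #|U| -> exists2 l, l \in U & degU U l = 1.
Proof.
move=> [con sm] U1.
case: (boolP [exists l in U, degU U l == 1]) => [/exists_inP[l lU /eqP]|]; first by exists l.
rewrite negb_exists_in => /forall_inP H.
have deg2 : forall i, i \in U -> 2 <= degU U i.
  move=> i iU.
  have [k kU ki] : exists2 k, k \in U & k != i.
    case/card_gt1P: U1 => a [b [aU bU ab]].
    by case: (eqVneq a i) => [E|ai]; [exists b => //; rewrite -E eq_sym | exists a].
  have ik : i != k by rewrite eq_sym.
  have [z rz] := conn_step ik (con _ _ iU kU).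
  have : 0 < degU U i.
    apply/card_gt0P; exists z; move: rz => /and3P[_ zU tz]; by rewrite inE zU tz.
  by have := H i iU; lia.
have : \sum_(i in U) 2 <= \sum_(i in U) degU U i by apply: leq_sum.
by rewrite sum_nat_const sm; lia.
Qed.

Lemma degen_U n U S : #|U| <= n -> U != set0 -> tree_on U -> dec_on U S -> S != set0 ->
  exists2 v, v \in S & #|[set u in S | eF v u]| <= 2.
Proof.
elim: n U => [|n IH] U Un U0 tU [d1 d2 d3] S0.
  by move: U0; rewrite -cards_eq0; lia.
have bound : forall v i, v \in B i -> {subset [set u in S | eF v u] <= B i :\ v} ->
    #|[set u in S | eF v u]| <= 2.
  move=> v i vi sub; have := subset_leq_card (introT subsetP sub).
  by have := Bsz i; rewrite (cardsD1 v (B i)) vi; lia.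
case: (leqP #|U| 1) => U1.
  have /cards1P[i Ui] : #|U| == 1 by move: U0; rewrite -cards_eq0; lia.
  case/set0Pn: S0 => v vS; exists v => //.
  have [i' + vi] := d1 v vS; rewrite Ui inE => /eqP ii; subst i'.
  apply: (bound v i vi) => u; rewrite inE => /andP[uS vu].
  have [k + /andP[_ ui]] := d2 v u vS uS vu; rewrite Ui inE => /eqP kk; subst k.
  rewrite in_setD1 ui andbT; apply/eqP => E; by rewrite E irrF in vu.
have [l lU dl] := leaf tU U1.
move: (dl) => /eqP /cards1P[j Nl].
have jl : j \in [set k in U | t l k] by rewrite Nl set11.
move: jl; rewrite inE => /andP[jU tlj].
have jnl : j != l by apply/eqP => E; rewrite E irrt in tlj.
have Hl1 : forall z, t l z -> z \in U -> z = j.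
  move=> z tz zU; have : z \in [set k in U | t l k] by rewrite inE zU tz.
  by rewrite Nl inE => /eqP.
have Hl2 : forall z, t z l -> z \in U -> z = j.
  by move=> z; rewrite symt; apply: Hl1.
case: (boolP [exists v in S, (v \in B l) && (v \notin B j)]).
  move/exists_inP => [v vS /andP[vl vj]]; exists v => //.
  apply: (bound v l vl) => u; rewrite inE => /andP[uS vu].
  have [k kU /andP[vk uk]] := d2 v u vS uS vu.
  case: (eqVneq l k) => [lk|lk].
    subst k; rewrite in_setD1 uk andbT; apply/eqP => E; by rewrite E irrF in vu.
  have [z /and5P[_ zU tz _ vz]] := conn_step lk (d3 v l k vS lU kU vl vk).
  by move: vz; rewrite (Hl1 z tz zU) (negbTE vj).
rewrite negb_exists_in => /forall_inP Hno.
have Hlj : forall v, v \in S -> v \in B l -> v \in B j.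
  by move=> v vS vl; have := Hno v vS; rewrite vl /= negbK.
have jU' : j \in U :\ l by rewrite in_setD1 jnl jU.
have inU' : forall i, i \in U -> i != l -> i \in U :\ l by move=> i iU il; rewrite in_setD1 il iU.
case: tU => con sm.
apply: (IH (U :\ l)) => //.
- by move: Un; rewrite (cardsD1 l U) lU; lia.
- by apply/set0Pn; exists j.
- split.
  + move=> x y /setD1P[xl xU] /setD1P[yl yU].
    have A1 : forall z, rU U l z -> z = j by move=> z /and3P[_ zU tz]; apply: Hl1.
    have A2 : forall z, rU U z l -> z = j by move=> z /and3P[zU _ tz]; apply: Hl2.
    move: (avoid A1 A2 xl yl (con x y xU yU)).
    apply: connect_sub => a b /= /and3P[/and3P[aU bU tab] al bl].
    by apply: connect1; rewrite /= !in_setD1 al bl aU bU tab.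
  + have e1 : \sum_(i in U) degU U i = degU U l + \sum_(i in U :\ l) degU U i.
      by rewrite (bigD1 l) //=; congr (_ + _); apply: eq_bigl => i; rewrite in_setD1 andbC.
    have e2 : forall i, i \in U :\ l -> degU U i = degU (U :\ l) i + (t i l).
      move=> i _; rewrite /degU (cardsD1 l [set k in U | t i k]) inE lU /= addnC.
      congr (_ + _); apply: eq_card => k; rewrite !inE andbA //.
    have e3 : \sum_(i in U :\ l) (t i l : nat) = 1.
      rewrite (bigD1 j) //= -symt tlj big1 // => i /andP[/setD1P[il iU] ij].
      by case: (boolP (t i l)) => // til; rewrite (Hl2 i til iU) eqxx in ij.
    move: sm; rewrite e1 (eq_bigr _ e2) big_split /= e3 dl (cardsD1 l U) lU.
    lia.
- split.
  + move=> v vS; have [i iU vi] := d1 v vS.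
    case: (eqVneq i l) => [il|il]; first by subst i; exists j => //; apply: Hlj.
    by exists i => //; apply: inU'.
  + move=> u v uS vS uv; have [i iU /andP[ui vi]] := d2 u v uS vS uv.
    case: (eqVneq i l) => [il|il]; first by subst i; exists j => //; rewrite !Hlj.
    by exists i; [apply: inU' | rewrite ui vi].
  + move=> v i k vS /setD1P[il iU] /setD1P[kl kU] vi vk.
    have A1 : forall z, rUv U v l z -> z = j by move=> z /and5P[_ zU tz _ _]; apply: Hl1.
    have A2 : forall z, rUv U v z l -> z = j by move=> z /and5P[zU _ tz _ _]; apply: Hl2.
    move: (avoid A1 A2 il kl (d3 v i k vS iU kU vi vk)).
    apply: connect_sub => a b /= /and3P[/and5P[aU bU tab va vb] al bl].
    by apply: connect1; rewrite /= !in_setD1 al bl aU bU tab va vb.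
Qed.


Lemma degen : tree_decomposition eF t B -> forall S, S != set0 ->
  exists2 v, v \in S & #|[set u in S | eF v u]| <= 2.
Proof.
case=> [[T0 _ con ecount] cov ecov vcon] S S0.
apply: (degen_U (n := #|setT : {set T}|) (U := setT)) => //.
- by rewrite -card_gt0 cardsT.
- split.
    move=> x y _ _; apply: connect_sub (con x y) => a b tab.
    by apply: connect1; rewrite /= !inE tab.
  rewrite cardsT -ecount -sum1dep_card.
  rewrite (eq_bigl (fun p : T * T => xpredT p.1 && t p.1 p.2)) //.
  rewrite -(pair_big_dep xpredT (fun i j => t i j) (fun _ _ => 1)) /=.
  apply: eq_big => [i|i _]; first by rewrite inE.
  rewrite sum1dep_card /degU; apply: eq_card => k.
  by rewrite !inE.
- split.
  + by move=> v _; have [i vi] := cov v; exists i; rewrite ?inE.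
  + by move=> u v _ _ uv; have [i ui] := ecov u v uv; exists i; rewrite ?inE.
  + move=> v i j _ _ _ vi vj; apply: connect_sub (vcon v i j vi vj) => a b /and3P[tab va vb].
    by apply: connect1; rewrite /= !inE tab va vb.
Qed.

End Tree.

Section PathAux.
Variables (T : eqType) (R : rel T).
Implicit Types (x : T) (p : seq T).

Lemma last_take' (x : T) p i : i <= size p -> last x (take i p) = nth x (x :: p) i.
Proof.
move=> ip; rewrite (last_nth x) size_take.
have -> : (if i < size p then i else size p) = i by case: ltngtP ip => //; lia.
by rewrite -/(take i.+1 (x :: p)) nth_take.
Qed.

Lemma path_take x p i : path R x p -> path R x (take i p).
Proof. by rewrite -{1}(cat_take_drop i p) cat_path => /andP[]. Qed.

Lemma path_drop x p j : j <= size p -> path R x p -> path R (nth x (x :: p) j) (drop j p).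
Proof.
move=> jp; rewrite -{1}(cat_take_drop j p) cat_path => /andP[_].
by rewrite last_take'.
Qed.

Lemma last_drop x p j : j <= size p -> last (nth x (x :: p) j) (drop j p) = last x p.
Proof.
by move=> jp; rewrite -last_take' // -last_cat cat_take_drop.
Qed.

Lemma path_nth x p i : i < size p -> path R x p -> R (nth x (x :: p) i) (nth x (x :: p) i.+1).
Proof.
move=> ip pth; have := path_drop (ltnW ip) pth.
by rewrite (drop_nth x ip) /= => /andP[].
Qed.

Lemma shortcut x p i k : i <= k <= size p ->
  path R x p -> path R (nth x (x :: p) i) (drop k p) ->
  path R x (take i p ++ drop k p) /\
  last x (take i p ++ drop k p) = last (nth x (x :: p) i) (drop k p) /\
  size (take i p ++ drop k p) = i + (size p - k).
Proof.
move=> /andP[ik kp] pth pk; have ip : i <= size p by lia.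
rewrite cat_path last_cat last_take' // path_take // pk size_cat size_take size_drop.
by split => //; split => //; case: ltngtP ip => //; lia.
Qed.

End PathAux.

Section Chord.
Variables (VF : finType) (eF : rel VF).
Hypothesis symF : symmetric eF.
Hypothesis irrF : irreflexive eF.
Hypothesis chF : chordal eF.

Lemma modS k i : i < k -> i.+1 %% k = if i.+1 == k then 0 else i.+1.
Proof.
move=> ik; case: eqP => [->|ne]; first exact: modnn.
by apply: modn_small; lia.
Qed.

Lemma chord_sep (S : {set VF}) w a b :
  w \in S -> a \in S -> b \in S -> a != b -> eF w a -> eF w b -> ~~ eF a b ->
  (forall u, u \in S -> eF w u -> (u == a) || (u == b)) ->
  ~~ connect [rel x y | [&& x \in S :\ w, y \in S :\ w & eF x y]] a b.
Proof.
move=> wS aS bS ab wa wb nab Hw; apply/negP => con.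
set R := [rel x y | [&& x \in S :\ w, y \in S :\ w & eF x y]] in con.
have aw : a != w by apply/eqP => E; rewrite E irrF in wa.
have aSw : a \in S :\ w by rewrite in_setD1 aw aS.
pose P n := [exists t : n.-tuple VF, path R a t && (last a t == b)].
have exP : exists n, P n.
  case/connectP: con => p pth lst; exists (size p); apply/existsP; exists (in_tuple p).
  by rewrite pth -lst eqxx.
case: (ex_minnP exP) => m /existsP[tp /andP[pth /eqP lst]] minm.
set p := val tp in pth lst.
have sz : size p = m by apply: size_tuple.
have minp : forall p', path R a p' -> last a p' = b -> m <= size p'.
  move=> p' h1 h2; apply: minm; apply/existsP; exists (in_tuple p').
  by rewrite h1 h2 eqxx.
pose q i := nth a (a :: p) i.
have q0 : q 0 = a by [].
have qm : q m = b by rewrite /q -sz -(last_nth a) lst.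
have Q3 : forall i, i < m -> R (q i) (q i.+1).
  by move=> i im; apply: (@path_nth _ R a p i) => //; rewrite sz.
have qS : forall i, i <= m -> q i \in S :\ w.
  case=> [//|i] im; by have /and3P[] := Q3 i im.
have qE : forall i j, i < j -> j <= m -> q i != q j.
  move=> i j ij jm; apply/negP => /eqP E.
  have jp : j <= size p by rewrite sz.
  have [h1 [h2 h3]] := @shortcut _ R a p i j (introT andP (conj (ltnW ij) jp)) pth
     (eq_ind _ (fun z => path R z (drop j p)) (path_drop jp pth) _ (esym E)).
  have E2 : nth a (a :: p) i = nth a (a :: p) j := E.
  have := minp _ h1; rewrite h2 E2 last_drop // lst h3 sz => /(_ erefl) H.
  clear -H ij jm; lia.
have qC : forall i j, i.+1 < j -> j <= m -> ~~ eF (q i) (q j).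
  move=> i j ij jm; apply/negP => E.
  have jp : j.-1 < size p by rewrite sz; clear -ij jm; lia.
  have im : i <= m by clear -ij jm; lia.
  have dj : drop j.-1 p = q j :: drop j p.
    rewrite (drop_nth a jp) /q; case: j ij jm jp {E} => [|j] //= *.
  have pj : path R (q i) (drop j.-1 p).
    rewrite dj /=; apply/andP; split.
      by rewrite /R /= qS ?qS ?E.
    by apply: path_drop; rewrite ?sz.
  have H1 : i <= j.-1 <= size p by apply/andP; split; rewrite ?sz; clear -ij jm; lia.
  have [h1 [h2 h3]] := shortcut H1 pth pj.
  have := minp _ h1; rewrite h2 h3 dj /= last_drop ?sz // lst ?sz => /(_ erefl) H.
  clear -H ij jm; lia.
have m0 : m != 0.
  by apply/eqP => m0; move: qm; rewrite m0 q0 => E; rewrite E eqxx in ab.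
have m1 : m != 1.
  apply/eqP => m1; have := Q3 0; rewrite m1 => /(_ isT) /and3P[_ _].
  by rewrite q0 -m1 qm (negbTE nab).
have m2 : 2 <= m by clear -m0 m1; lia.
have qw : forall j, j <= m -> eF w (q j) = (j == 0) || (j == m).
  move=> j jm; apply/idP/idP.
    move=> wq; have /setD1P[_ qjS] := qS j jm.
    case/orP: (Hw _ qjS wq) => /eqP qq.
      case: (eqVneq j 0) => // j0; have H0 : 0 < j by clear -j0; lia.
      by have := qE 0 j H0 jm; rewrite q0 qq eqxx.
    case: (eqVneq j m) => [->|jm']; first by rewrite orbT.
    have H0 : j < m by clear -jm jm'; lia.
    by have := qE j m H0 (leqnn m); rewrite qm qq eqxx.
  by case/orP => /eqP ->; [rewrite q0 | rewrite qm].
have qq : forall i j, i <= m -> j <= m -> eF (q i) (q j) = (j == i.+1) || (i == j.+1).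
  move=> i j im jm; apply/idP/idP.
    move=> E; case: (ltngtP i j) => [ij|ji|ij].
    - case: (eqVneq j i.+1) => // ne.
      have H0 : i.+1 < j by clear -ij ne; lia.
      by have := qC i j H0 jm; rewrite E.
    - case: (eqVneq i j.+1) => [_|ne]; first by rewrite orbT.
      have H0 : j.+1 < i by clear -ji ne; lia.
      by have := qC j i H0 im; rewrite symF E.
    - by move: E; rewrite ij irrF.
  case/orP => /eqP E.
    by subst j; have /and3P[] := Q3 i jm.
  by subst i; rewrite symF; have /and3P[] := Q3 j im.
apply: chF; exists m.+2, (fun i : 'I_m.+2 => if val i is i'.+1 then q i' else w); split.
- by clear -m2; lia.
- move=> [i hi] [j hj] /= E; apply: val_inj => /=; move: E.
  case: i hi => [|i] hi; case: j hj => [|j] hj //= E.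
  + have := qS j; rewrite -E in_setD1 eqxx /= => H; exfalso; apply: notF; apply: H.
    by clear -hj; lia.
  + have := qS i; rewrite E in_setD1 eqxx /= => H; exfalso; apply: notF; apply: H.
    by clear -hi; lia.
  + congr _.+1; case: (ltngtP i j) => // ij.
      have H0 : j <= m by clear -hj; lia.
      by have := qE i j ij H0; rewrite E eqxx.
    have H0 : i <= m by clear -hi; lia.
    by have := qE j i ij H0; rewrite E eqxx.
- move=> [i hi] [j hj] /=; rewrite !modS //.
  case: i hi => [|i] hi; case: j hj => [|j] hj.
  + by rewrite irrF /=.
  + rewrite (qw j); last by clear -hj; lia.
    by clear -hj; rewrite /=; case: ifP => E; lia.
  + rewrite symF (qw i); last by clear -hi; lia.
    by clear -hi; rewrite /=; case: ifP => E; lia.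
  + rewrite (qq i j); try by clear -hi hj; lia.
    by clear -hi hj; case: ifP => E; case: ifP => E'; lia.
Qed.

End Chord.

Section Simp.
Variables (VF : finType) (eF : rel VF).
Hypothesis symF : symmetric eF.
Hypothesis irrF : irreflexive eF.
Hypothesis chF : chordal eF.
Hypothesis Hdeg : forall S : {set VF}, S != set0 ->
  exists2 v, v \in S & #|[set u in S | eF v u]| <= 2.

Definition clique (Q : {set VF}) := forall a b, a \in Q -> b \in Q -> a != b -> eF a b.
Definition NS (S : {set VF}) w := [set b in S | eF w b].

Lemma conn_in (X : {set VF}) x y : x \in X ->
  connect [rel a b | [&& a \in X, b \in X & eF a b]] x y -> y \in X.
Proof.
move=> xX /connectP[p pth ->]; elim: p x xX pth => //= z p IH x _ /andP[/and3P[_ zX _] pth].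
exact: IH.
Qed.

Lemma clique_dec (Q : {set VF}) : clique Q \/ exists a b, [/\ a \in Q, b \in Q, a != b & ~~ eF a b].
Proof.
case: (boolP [forall a in Q, forall b in Q, (a != b) ==> eF a b]) => H.
  left => a b aQ bQ ab; move/forall_inP/(_ a aQ)/forall_inP/(_ b bQ): H.
  by rewrite ab.
right; move: H; rewrite negb_forall_in => /existsP[a /andP[aQ]].
rewrite negb_forall_in => /existsP[b /andP[bQ]]; rewrite negb_imply => /andP[ab nab].
by exists a, b.
Qed.

Lemma simp_ex n : forall S : {set VF}, #|S| <= n -> forall Q : {set VF},
  Q \subset S -> clique Q -> ~~ (S \subset Q) ->
  exists w, [/\ w \in S, w \notin Q, #|NS S w| <= 2 & clique (NS S w)].
Proof.
elim: n => [|n IH] S Sn Q QS cQ SQ.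
  have S0 : S = set0 by apply/eqP; rewrite -cards_eq0; lia.
  by move: SQ; rewrite S0 sub0set.
have S0 : S != set0 by apply: contraNneq SQ => ->; rewrite sub0set.
have [w wS wdeg] := Hdeg S0.
have {}wdeg : #|NS S w| <= 2 := wdeg.
have NSS : forall S' w', NS S' w' \subset S' by move=> S' w'; apply/subsetP => x; rewrite inE => /andP[].
have NSw : forall S' w' x, x \in NS S' w' -> x != w'.
  by move=> S' w' x; rewrite inE => /andP[_ wx]; apply/eqP => E; rewrite E irrF in wx.
have Sw : #|S :\ w| <= n by move: Sn; rewrite (cardsD1 w S) wS; lia.
case: (clique_dec (NS S w)) => [cN|[a [b [aN bN ab nab]]]].
  case: (boolP (w \in Q)) => wQ; last by exists w.
  have QN : forall q, q \in Q -> q != w -> q \in NS S w.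
    move=> q qQ qw; rewrite inE (subsetP QS q qQ) /=.
    by apply: cQ => //; rewrite eq_sym.
  case: (boolP ((S :\ w) \subset NS S w)) => sub.
    case/subsetPn: SQ => z zS zQ.
    have zw : z != w by apply: contraNneq zQ => ->.
    have zN : z \in NS S w by apply: (subsetP sub); rewrite in_setD1 zw zS.
    exists z; split => //.
      have : #|NS S z| <= #|S :\ z|.
        apply: subset_leq_card; apply/subsetP => u uN.
        by rewrite in_setD1 (NSw _ _ _ uN) (subsetP (NSS S z) u uN).
      have : #|S| <= 1 + #|NS S w|.
        by rewrite (cardsD1 w S) wS leq_add2l; apply: subset_leq_card.
      have := cardsD1 z S; rewrite zS => H1 H2 H3.
      clear -H1 H2 H3 wdeg; lia.
    move=> u v uN vN uv.
    have inW : forall x, x \in S -> x != w -> x \in NS S w.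
      by move=> x xS xw; apply: (subsetP sub); rewrite in_setD1 xw xS.
    have uS := subsetP (NSS S z) u uN; have vS := subsetP (NSS S z) v vN.
    case: (eqVneq u w) => [uw|uw].
      subst u; have vw : v != w by rewrite eq_sym.
      by have := inW v vS vw; rewrite inE => /andP[].
    case: (eqVneq v w) => [vw|vw].
      by subst v; have := inW u uS uw; rewrite inE symF => /andP[].
    by apply: cN => //; apply: inW.
  have QS' : NS S w \subset S :\ w.
    by apply/subsetP => x xN; rewrite in_setD1 (NSw _ _ _ xN) (subsetP (NSS S w) x xN).
  have [z [zS zN zdeg zcl]] := IH (S :\ w) Sw (NS S w) QS' cN sub.
  move: zS; rewrite in_setD1 => /andP[zw zS].
  have zwn : ~~ eF z w by apply: contraNN zN => zw'; rewrite inE zS symF.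
  have E : NS S z = NS (S :\ w) z.
    apply/setP => u; rewrite !inE; case: (eqVneq u w) => [->|] //=.
    by rewrite (negbTE zwn) andbF.
  exists z; split => //; rewrite ?E //.
  apply: contraNN zN => zQ; apply: QN => //.
have Nab : forall u, u \in S -> eF w u -> (u == a) || (u == b).
  move=> u uS wu; have uN : u \in NS S w by rewrite inE uS wu.
  apply/negPn/negP; rewrite negb_or => /andP[ua ub].
  have : 3 <= #|NS S w|.
    rewrite (cardsD1 a) aN (cardsD1 b (NS S w :\ a)) in_setD1 eq_sym ab bN.
    have : 0 < #|NS S w :\ a :\ b|.
      by apply/card_gt0P; exists u; rewrite !in_setD1 ua ub uN.
    move=> H; clear -H; lia.
  move=> H; clear -H wdeg; lia.
have aS := subsetP (NSS S w) a aN; have bS := subsetP (NSS S w) b bN.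
have wa : eF w a by move: aN; rewrite inE => /andP[].
have wb : eF w b by move: bN; rewrite inE => /andP[].
set R := [rel x y | [&& x \in S :\ w, y \in S :\ w & eF x y]].
have ncab := chord_sep symF irrF chF wS aS bS ab wa wb nab Nab.
have symR : connect_sym R.
  apply: sym_connect_sym => x y /=; by rewrite symF andbCA.
have aSw : a \in S :\ w by rewrite in_setD1 (NSw _ _ _ aN) aS.
have bSw : b \in S :\ w by rewrite in_setD1 (NSw _ _ _ bN) bS.
have side : forall X Y, X \in S :\ w -> Y \in S :\ w -> ~~ connect R X Y ->
    (forall x, x \in Q -> ~~ connect R X x) ->
    exists w0, [/\ w0 \in S, w0 \notin Q, #|NS S w0| <= 2 & clique (NS S w0)].
  move=> X Y XS YS nXY HQ.
  pose S1 := w |: [set y | connect R X y].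
  have S1S : S1 \subset S.
    apply/subsetP => y; rewrite !inE => /orP[/eqP -> //|cy].
    by have := conn_in XS cy; rewrite in_setD1 => /andP[].
  have S1lt : #|S1| <= n.
    have : #|S1| < #|S|.
      apply: proper_card; apply/properP; split => //; exists Y.
        by move: YS; rewrite in_setD1 => /andP[].
      rewrite !inE negb_or nXY andbT.
      by move: YS; rewrite in_setD1 => /andP[].
    move=> H; clear -H Sn; lia.
  have XnW : X != w by move: XS; rewrite in_setD1 => /andP[].
  have P1 : [set w] \subset S1 by rewrite sub1set setU11.
  have P2 : clique [set w] by move=> u v; rewrite !inE => /eqP -> /eqP ->; rewrite eqxx.
  have P3 : ~~ (S1 \subset [set w]).
    apply/subsetPn; exists X; last by rewrite inE.
    by rewrite !inE connect0 orbT.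
  have [z [zS1 zQ1 zdeg zcl]] := IH S1 S1lt [set w] P1 P2 P3.
  have zw : z != w by apply: contraNneq zQ1 => ->; rewrite inE.
  have cz : connect R X z by move: zS1; rewrite !inE (negbTE zw).
  have zSw : z \in S :\ w := conn_in XS cz.
  have E : NS S z = NS S1 z.
    apply/setP => u; rewrite !inE.
    case: (eqVneq u w) => [->|uw] /=; first by rewrite wS.
    case: (boolP (u \in S)) => uS /=; last first.
      by case: (boolP (connect R X u)) => // cu; have := conn_in XS cu; rewrite in_setD1 (negbTE uS) andbF.
    case: (boolP (eF z u)) => zu; rewrite ?andbF ?andbT //.
    apply/esym; apply: connect_trans cz (connect1 _); by rewrite /= zSw in_setD1 uw uS zu.
  exists z; split.
  - by rewrite (subsetP S1S z zS1).
  - by apply/negP => zQ; move: (HQ z zQ); rewrite cz.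
  - by rewrite E.
  - by rewrite E.
case: (boolP [exists x in Q, connect R a x]) => [/exists_inP[x xQ ax]|]; last first.
  rewrite negb_exists_in => /forall_inP HQ.
  by apply: (side a b aSw bSw ncab) => x xQ; apply: HQ.
apply: (side b a bSw aSw); first by rewrite symR.
move=> y yQ; apply/negP => cby.
case: (eqVneq x y) => [xy|xy].
  by subst y; move: ncab; rewrite (connect_trans ax) // symR.
have xSw : x \in S :\ w := conn_in aSw ax.
have ySw : y \in S :\ w := conn_in bSw cby.
have Rxy : R x y by rewrite /= xSw ySw cQ.
have cxy : connect R x y by apply: connect1.
have cyb : connect R y b by rewrite symR.
by move: ncab; rewrite (connect_trans ax (connect_trans cxy cyb)).
Qed.

End Simp.

Theorem mainTheorem8 (V V' : finType) (e : rel V) (e' : rel V')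
  (hG : simple_graph e) (hG' : simple_graph e')
  (nG : no_isolated e) (nG' : no_isolated e') :
  (exists (VF : finType) (eF : rel VF),
      [/\ simple_graph eF, chordal eF, treewidth_le eF 2 &
          hom_count eF e <> hom_count eF e']) ->
  eb_distinguishable e e'.
Proof.
case=> VF [eF [[symF irrF] chF [T [t [B [td Bsz]]]] hne]].
rewrite /eb_distinguishable.
case: (eqVneq #|V| #|V'|) => [HV|HV]; last by left; apply/eqP.
right; apply: NNPP => H; apply: hne.
have Heb : forall l, eb_graph e l = eb_graph e' l.
  by move=> l; case: (eqVneq (eb_graph e l) (eb_graph e' l)) => // ne; exfalso; apply: H; exists l; apply/eqP.
have [[_ [symt irrt] _ _] _ _ _] := td.
have Hdeg := degen symt irrt irrF Bsz td.
apply: (hom_eq (conj symF irrF) _ HV Heb hG hG' nG nG').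
move=> S S0.
have P1 : set0 \subset S by rewrite sub0set.
have P2 : clique eF set0 by move=> a b; rewrite inE.
have P3 : ~~ (S \subset set0) by apply: contra S0; rewrite subset0.
have [w [wS _ wd wc]] := @simp_ex VF eF symF irrF chF Hdeg #|S| S (leqnn _) set0 P1 P2 P3.
by exists w; split.
Qed.
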